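(* Let $\Gamma$ be a group with centre $Z\Gamma$, and $G=\bigoplus_{\mathbf{Q}_2}\Gamma\rtimes V$ with $V$ acting by $(v\cdot a)(x)=a(v^{-1}x)$. For $v\in V$ let $p_v(x)=\log_2(v'(v^{-1}x))-\nu(x)+\nu(v^{-1}x)$, $x\in\mathbf{Q}_2$, and for $\zeta\in Z\Gamma$ let $c(\zeta)_v(x)=\zeta^{p_v(x)}$. Then $c(\zeta)$ takes values in $\bigoplus_{\mathbf{Q}_2}Z\Gamma$ and satisfies $c(\zeta)_{vw}=c(\zeta)_v\cdot c(\zeta)_w^v$ for all $v,w\in V$, where $c_w^v(x)=c_w(v^{-1}x)$. Moreover $E:Z\Gamma\to\mathrm{Aut}(G)$, $E_\zeta(av)=a\cdot c(\zeta)_v\cdot v$ ($a\in\bigoplus_{\mathbf{Q}_2}\Gamma$, $v\in V$), is a well-defined injective group morphism.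
   Context: Cantor space $\mathfrak C=\{0,1\}^{\mathbf N}$; $C_m=\{m\cdot x\}$. Thompson's group $V$: homeomorphisms $v$ with $v(m_kx)=m'_kx$ for partitions $\mathfrak C=\bigsqcup C_{m_k}=\bigsqcup C_{m'_k}$; slope $v'(x)=2^{|m_k|-|m'_k|}$ on $C_{m_k}$. $\mathbf{Q}_2\subset\mathfrak C$: eventually-zero sequences, identified with dyadic rationals of $[0,1)$ via $x\mapsto\sum_{n\ge1}x_n2^{-n}$. $\nu$ is the dyadic valuation on $\mathbf{Q}$: $\nu(0)=0$, $\nu(2^kp/q)=k$ for $p,q$ odd. $\bigoplus_{\mathbf{Q}_2}\Gamma$ denotes finitely supported maps $\mathbf{Q}_2\to\Gamma$. *)

(* Defs.v *)
From HB Require Import structures.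
From mathcomp Require Import all_boot all_order.
From mathcomp Require Import ssralg ssrnum ssrint rat.
From Stdlib Require Import ClassicalEpsilon.

Set Implicit Arguments.
Unset Strict Implicit.
Unset Printing Implicit Defensive.

(** Cantor space {0,1}^N, indices starting at 0 (x_0 is the paper's x_1). *)
Definition cantor := nat -> bool.

Definition word := seq bool.

Definition wcat (m : word) (x : cantor) : cantor :=
  fun n => if n < size m then nth false m n else x (n - size m).

Definition in_cyl (m : word) (x : cantor) : Prop := exists y, x = wcat m y.

Definition cyl_partition (ms : seq word) : Prop :=
  forall x : cantor, exists! k, k < size ms /\ in_cyl (nth [::] ms k) x.

Definition V_data (v : cantor -> cantor) (ms ms' : seq word) : Prop :=
  [/\ cyl_partition ms, cyl_partition ms', size ms = size ms' &
      forall k x, k < size ms -> v (wcat (nth [::] ms k) x) = wcat (nth [::] ms' k) x].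

(** Thompson's group V, as a set of self-maps of Cantor space
    (group law = composition). *)
Definition isV (v : cantor -> cantor) : Prop := exists ms ms', V_data v ms ms'.

Definition Vinv (v : cantor -> cantor) : cantor -> cantor :=
  epsilon (inhabits id) (fun g => forall x, g (v x) = x /\ v (g x) = x).

Definition log2_slope (v : cantor -> cantor) (x : cantor) : int :=
  epsilon (inhabits 0%R) (fun d : int => exists ms ms' k,
    [/\ V_data v ms ms', k < size ms, in_cyl (nth [::] ms k) x &
        d = ((size (nth [::] ms k))%:Z - (size (nth [::] ms' k))%:Z)%R]).

Definition isQ2 (x : cantor) : Prop := exists N, forall n, N <= n -> x n = false.

Definition q2bound (x : cantor) : nat :=
  epsilon (inhabits 0) (fun N => forall n, N <= n -> x n = false).

(** The dyadic rational sum_{n>=1} x_n 2^{-n} (with 0-based indices). *)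
Definition q2rat (x : cantor) : rat :=
  (\sum_(i < q2bound x) (x i)%:R / 2%:R ^+ i.+1)%R.

Definition nu (r : rat) : int :=
  if r == 0%R then 0%R
  else ((logn 2 `|numq r|)%:Z - (logn 2 `|denq r|)%:Z)%R.

Definition zpow (Gam : groupType) (g : Gam) (z : int) : Gam :=
  match z with
  | Posz n => (g ^+ n)%g
  | Negz n => ((g ^+ n.+1)^-1)%g
  end.

Definition central (Gam : groupType) (z : Gam) : Prop :=
  forall g : Gam, (z * g = g * z)%g.

(** Finitely supported maps Q_2 -> Gamma, encoded as maps on Cantor space
    which are trivial outside Q_2 and outside a finite set. *)
Definition fsupp (Gam : groupType) (a : cantor -> Gam) : Prop :=
  (forall x, ~ isQ2 x -> a x = 1%g) /\
  exists s : list cantor, forall x, a x <> 1%g -> List.In x s.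

Definition actV (Gam : groupType) (v : cantor -> cantor) (a : cantor -> Gam) :
  cantor -> Gam := fun x => a (Vinv v x).

(** Raw carrier: pairs (a, v) standing for the element a v. *)
Definition Gel (Gam : groupType) : Type := ((cantor -> Gam) * (cantor -> cantor))%type.

Definition inG (Gam : groupType) (g : Gel Gam) : Prop := fsupp g.1 /\ isV g.2.

Definition Gmul (Gam : groupType) (g h : Gel Gam) : Gel Gam :=
  ((fun x => g.1 x * actV g.2 h.1 x)%g, g.2 \o h.2).

Definition isAutG (Gam : groupType) (f : Gel Gam -> Gel Gam) : Prop :=
  [/\ forall g, inG g -> inG (f g),
      forall g h, inG g -> inG h -> f (Gmul g h) = Gmul (f g) (f h),
      forall g h, inG g -> inG h -> f g = f h -> g = h &
      forall h, inG h -> exists g, inG g /\ f g = h].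

Definition p_v (v : cantor -> cantor) (x : cantor) : int :=
  (log2_slope v (Vinv v x) - nu (q2rat x) + nu (q2rat (Vinv v x)))%R.

Definition c_coc (Gam : groupType) (zeta : Gam) (v : cantor -> cantor) :
  cantor -> Gam :=
  fun x => if excluded_middle_informative (isQ2 x) then zpow zeta (p_v v x)
           else 1%g.

Definition E_aut (Gam : groupType) (zeta : Gam) (g : Gel Gam) : Gel Gam :=
  ((fun x => g.1 x * c_coc zeta g.2 x)%g, g.2).

(* Main.v *)
Require Import Defs.
From mathcomp Require Import all_boot ssralg ssrint rat.
From mathcomp Require Import ssrnum zify.
From Stdlib Require Import ClassicalEpsilon FunctionalExtensionality Classical.

Set Implicit Arguments.
Unset Strict Implicit.
Unset Printing Implicit Defensive.



Definition dropc (n : nat) (x : cantor) : cantor := fun i => x (i + n).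

Definition incb (m : word) (x : cantor) : bool :=
  all (fun i => x i == nth false m i) (iota 0 (size m)).

Lemma wcat_lt m z i : i < size m -> wcat m z i = nth false m i.
Proof. by rewrite /wcat => ->. Qed.

Lemma wcat_ge m z i : wcat m z (i + size m) = z i.
Proof. by rewrite /wcat ltnNge leq_addl /= addnK. Qed.

Lemma dropc_wcat m z : dropc (size m) (wcat m z) = z.
Proof. apply: functional_extensionality => i; exact: wcat_ge. Qed.

Lemma incbP m x : reflect (in_cyl m x) (incb m x).
Proof.
apply: (iffP allP) => [H | [y ->] i].
  exists (dropc (size m) x); apply: functional_extensionality => n.
  rewrite /wcat /dropc; case: ltnP => hn.
    by apply/eqP; apply: H; rewrite mem_iota.
  by rewrite subnK.
by rewrite mem_iota add0n => hi; rewrite wcat_lt.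
Qed.

Lemma wcat_cat a b z : wcat (a ++ b) z = wcat a (wcat b z).
Proof.
apply: functional_extensionality => n; rewrite /wcat size_cat nth_cat.
case: (ltnP n (size a)) => h1.
  by rewrite (leq_trans h1 (leq_addr _ _)).
by rewrite -subnDA -[in RHS](ltn_add2l (size a)) (subnKC h1).
Qed.

Lemma wcat_inj a z1 z2 : wcat a z1 = wcat a z2 -> z1 = z2.
Proof. by move=> h; rewrite -(dropc_wcat a z1) h dropc_wcat. Qed.

Lemma wcat_size a b : (forall z, wcat a z = wcat b z) -> size a = size b.
Proof.
wlog h : a b / size a < size b.
  move=> W H; case: (ltngtP (size a) (size b)) => // h.
    by apply: W.
  by symmetry; apply: W => // z; rewrite H.
move=> H; exfalso.
have := congr1 (fun f => f (size a)) (H (fun _ => true)).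
have := congr1 (fun f => f (size a)) (H (fun _ => false)).
rewrite /= /wcat ltnn h.
by move=> <-.
Qed.

Lemma wcat_prefix a b z1 z2 : wcat a z1 = wcat b z2 ->
  (exists u, b = a ++ u) \/ (exists u, a = b ++ u).
Proof.
wlog h : a b z1 z2 / size a <= size b.
  move=> W H; case: (leqP (size a) (size b)) => h; first exact: (W a b z1 z2 h H).
  by case: (W b a z2 z1 (ltnW h) (esym H)); [right|left].
move=> H; left; exists (drop (size a) b).
suff ha : take (size a) b = a by rewrite -[X in X ++ _]ha cat_take_drop.
apply: (@eq_from_nth _ false); first by rewrite size_take_min (minn_idPl h).
move=> i; rewrite size_take_min (minn_idPl h) => hi; rewrite nth_take //.
have := congr1 (fun f => f i) H => /=.
by rewrite wcat_lt // wcat_lt ?(leq_trans hi h) // => ->.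
Qed.

Lemma incb_wcat m z : incb m (wcat m z).
Proof. by apply/incbP; exists z. Qed.

Lemma incb_cat a u x : incb (a ++ u) x = incb a x && incb u (dropc (size a) x).
Proof.
apply/incbP/andP => [[y ->] | [/incbP [y ->] /incbP [z]]].
  rewrite wcat_cat; split; first exact: incb_wcat.
  by rewrite dropc_wcat incb_wcat.
by rewrite dropc_wcat => ->; exists z; rewrite wcat_cat.
Qed.

Lemma count_exists1 (T : Type) (x0 : T) (p : pred T) (s : seq T) :
  count p s = 1 <-> exists! k, k < size s /\ p (nth x0 s k).
Proof.
elim: s => [|a s IH] /=.
  by split => // [[k [[]]]].
case: (boolP (p a)) => pa.
  rewrite add1n; split.
    move=> /eqP; rewrite eqSS -leqn0 leqNgt -has_count => hs.
    exists 0; split => // [[|k]] [//] hk pk.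
    by case/negP: hs; apply/(has_nthP x0); exists k.
  move=> [k [_ Hk]]; congr S; apply/eqP; rewrite -leqn0 leqNgt -has_count.
  apply/negP => /(has_nthP x0) [j hj pj].
  have h1 := Hk j.+1 (conj hj pj); have h2 := Hk 0 (conj isT pa).
  by rewrite h1 in h2.
rewrite add0n IH; split.
  move=> [k [[hk pk] Hk]]; exists k.+1; split => // [[|j]] [hj pj].
    by rewrite pj in pa.
  by rewrite (Hk j).
move=> [[|k] [[hk pk] Hk]]; first by rewrite pk in pa.
exists k; split => // j [hj pj]; by have := Hk j.+1 (conj hj pj); case.
Qed.

Lemma partitionP ms : cyl_partition ms <-> forall x, count (incb^~ x) ms = 1.
Proof.
split => H x.
  apply/(count_exists1 [::]); have [k [[hk hc] Hk]] := H x.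
  exists k; split; first by split => //; apply/incbP.
  by move=> j [hj /incbP pj]; apply: Hk.
have /(count_exists1 [::]) [k [[hk hc] Hk]] := H x.
exists k; split; first by split => //; apply/incbP.
by move=> j [hj /incbP pj]; apply: Hk.
Qed.


Definition compp (p q : word * word) : seq (word * word) :=
  if take (size p.2) q.1 == p.2 then [:: (p.1 ++ drop (size p.2) q.1, q.2)]
  else if take (size q.1) p.2 == q.1 then [:: (p.1, q.2 ++ drop (size q.1) p.2)]
  else [::].

Definition Comp (P Q : seq (word * word)) : seq (word * word) :=
  flatten [seq flatten [seq compp p q | q <- Q] | p <- P].

Definition swp (r : word * word) : word * word := (r.2, r.1).

Lemma take_cat_eq (a u : word) : take (size a) (a ++ u) == a.
Proof. by rewrite take_size_cat. Qed.

Lemma count_compp_dom p q x :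
  count (fun r => incb r.1 x) (compp p q) =
  incb p.1 x && incb q.1 (wcat p.2 (dropc (size p.1) x)).
Proof.
case: p q => a a' [b b']; rewrite /compp /=.
case: ifP => [/eqP h1 | h1].
  rewrite /= addn0 -[in RHS](cat_take_drop (size a') b) h1 incb_cat.
  rewrite incb_cat incb_wcat dropc_wcat /=.
  case: (boolP (incb a x)) => //= /incbP [y ->]; by rewrite dropc_wcat.
case: ifP => [/eqP h2 | h2].
  rewrite /= addn0 -[in RHS](cat_take_drop (size b) a') h2 wcat_cat incb_wcat.
  by rewrite andbT.
rewrite /=; case: andP => // [[_ /incbP [z hz]]]; exfalso.
case: (wcat_prefix hz) => [[u hu] | [u hu]].
  by rewrite hu take_cat_eq in h1.
by rewrite hu take_cat_eq in h2.
Qed.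

Lemma count_compp_cod p q x :
  count (fun r => incb r.2 x) (compp p q) =
  count (fun r => incb r.1 x) (compp (swp q) (swp p)).
Proof.
case: p q => a a' [b b']; rewrite /compp /swp /=.
case: ifP => [/eqP h1 | h1]; case: ifP => [/eqP h2 | h2] //=.
have hs1 : size a' <= size b.
  by apply/minn_idPl; rewrite -size_take_min h1.
have hs2 : size b <= size a'.
  by apply/minn_idPl; rewrite -size_take_min h2.
by rewrite drop_oversize ?cats0.
Qed.

Lemma count_Comp f P Q :
  count f (Comp P Q) = \sum_(p <- P) \sum_(q <- Q) count f (compp p q).
Proof.
elim: P => [|p P IH]; first by rewrite big_nil.
rewrite /Comp /= count_cat -/(Comp P Q) IH big_cons; congr addn.
elim: Q {IH} => [|q Q IHq]; first by rewrite big_nil.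
by rewrite /= count_cat IHq big_cons.
Qed.

Lemma count_inner p Q x :
  \sum_(q <- Q) count (fun r => incb r.1 x) (compp p q) =
  incb p.1 x * count (fun q => incb q.1 (wcat p.2 (dropc (size p.1) x))) Q.
Proof.
elim: Q => [|q Q IH]; first by rewrite big_nil muln0.
by rewrite big_cons IH count_compp_dom /= mulnDr mulnb.
Qed.

Lemma count_Comp_dom P Q x :
  (forall y, count (fun q => incb q.1 y) Q = 1) ->
  count (fun r => incb r.1 x) (Comp P Q) = count (fun p => incb p.1 x) P.
Proof.
move=> HQ; rewrite count_Comp.
elim: P => [|p P IH]; first by rewrite big_nil.
by rewrite big_cons IH count_inner HQ muln1.
Qed.

Lemma count_Comp_cod P Q x :
  (forall y, count (fun p => incb p.2 y) P = 1) ->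
  count (fun r => incb r.2 x) (Comp P Q) = count (fun q => incb q.2 x) Q.
Proof.
move=> HP; rewrite count_Comp.
under eq_bigr do under eq_bigr do rewrite count_compp_cod.
rewrite exchange_big /=.
have -> : \sum_(q <- Q) \sum_(p <- P) count (fun r => incb r.1 x) (compp (swp q) (swp p))
   = \sum_(q <- map swp Q) \sum_(p <- map swp P) count (fun r => incb r.1 x) (compp q p).
  by rewrite big_map; apply: eq_bigr => q _; rewrite big_map.
rewrite -count_Comp count_Comp_dom ?count_map //.
by move=> y; rewrite count_map -(HP y).
Qed.

Lemma mem_Comp r P Q : r \in Comp P Q ->
  exists p q, [/\ p \in P, q \in Q & r \in compp p q].
Proof.
case/flattenP => s /mapP [p hp ->] /flattenP [s' /mapP [q hq ->] hr].
by exists p, q.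
Qed.

Lemma compp_fun (v w : cantor -> cantor) p q r :
  (forall z, w (wcat p.1 z) = wcat p.2 z) ->
  (forall z, v (wcat q.1 z) = wcat q.2 z) ->
  r \in compp p q -> forall z, v (w (wcat r.1 z)) = wcat r.2 z.
Proof.
case: p q => a a' [b b'] /= Hw Hv; rewrite /compp /=.
case: ifP => [/eqP h1 | h1].
  rewrite inE => /eqP -> z /=.
  by rewrite wcat_cat Hw -wcat_cat -{1}h1 cat_take_drop Hv.
case: ifP => [/eqP h2 | h2] //.
rewrite inE => /eqP -> z /=.
by rewrite Hw -{1}(cat_take_drop (size b) a') h2 wcat_cat Hv wcat_cat.
Qed.

Lemma Vdata_zip v ms ms' : V_data v ms ms' ->
  forall p, p \in zip ms ms' -> forall z, v (wcat p.1 z) = wcat p.2 z.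
Proof.
case=> _ _ hs H p /(nthP ([::],[::])) [i hi <-] z.
rewrite nth_zip //=; apply: H.
by rewrite size_zip -hs minnn in hi.
Qed.

Lemma count_zip1 (ms ms' : seq word) y : size ms = size ms' ->
  count (fun p => incb p.1 y) (zip ms ms') = count (incb^~ y) ms.
Proof.
by move=> hs; rewrite -(count_map fst (incb^~ y)); congr count; apply: unzip1_zip; rewrite hs.
Qed.

Lemma count_zip2 (ms ms' : seq word) y : size ms = size ms' ->
  count (fun p => incb p.2 y) (zip ms ms') = count (incb^~ y) ms'.
Proof.
by move=> hs; rewrite -(count_map snd (incb^~ y)); congr count; apply: unzip2_zip; rewrite hs.
Qed.

Lemma Vcomp v w : isV v -> isV w -> isV (v \o w).
Proof.
move=> [ns [ns' Hv]] [ms [ms' Hw]].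
have Hv' := Vdata_zip Hv; have Hw' := Vdata_zip Hw.
case: Hv => /partitionP pn /partitionP pn' hsn _.
case: Hw => /partitionP pm /partitionP pm' hsm _.
set C := Comp (zip ms ms') (zip ns ns').
exists (map fst C), (map snd C); split.
- apply/partitionP => x; rewrite count_map count_Comp_dom.
    by rewrite count_zip1.
  by move=> y; rewrite count_zip1.
- apply/partitionP => x; rewrite count_map count_Comp_cod.
    by rewrite count_zip2.
  by move=> y; rewrite count_zip2.
- by rewrite !size_map.
- move=> k x hk; rewrite size_map in hk.
  rewrite (nth_map ([::],[::])) // (nth_map ([::],[::])) //=.
  have := mem_nth ([::],[::]) hk => /mem_Comp [p [q [hp hq hr]]].
  exact: (compp_fun (Hw' p hp) (Hv' q hq) hr).
Qed.


Lemma Vdecomp v ms ms' : V_data v ms ms' -> forall x,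
  exists k z, [/\ k < size ms, x = wcat (nth [::] ms k) z &
                  v x = wcat (nth [::] ms' k) z].
Proof.
move=> [pm pm' hs H] x; have [k [[hk [z hz]] _]] := pm x.
by exists k, z; split => //; rewrite hz H.
Qed.

Lemma Vdecomp' v ms ms' : V_data v ms ms' -> forall y,
  exists k z, [/\ k < size ms, y = wcat (nth [::] ms' k) z &
                  v (wcat (nth [::] ms k) z) = y].
Proof.
move=> [pm pm' hs H] y; have [k [[hk [z hz]] _]] := pm' y.
by exists k, z; rewrite hs; split => //; rewrite hz H // hs.
Qed.

Lemma V_inj v : isV v -> injective v.
Proof.
move=> [ms [ms' Hv]] x1 x2 h.
have [k1 [z1 [hk1 e1 f1]]] := Vdecomp Hv x1.
have [k2 [z2 [hk2 e2 f2]]] := Vdecomp Hv x2.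
case: Hv => _ pm' hs _.
have [k [_ Hk]] := pm' (v x1).
have hk1' : k1 < size ms' by rewrite -hs.
have hk2' : k2 < size ms' by rewrite -hs.
have ek1 := Hk k1 (conj hk1' (ex_intro _ z1 f1)).
rewrite h in Hk.
have ek2 := Hk k2 (conj hk2' (ex_intro _ z2 f2)).
subst k1 k2; rewrite e1 e2; congr wcat.
by apply: (@wcat_inj (nth [::] ms' k)); rewrite -f1 -f2 h.
Qed.

Lemma V_surj v : isV v -> forall y, exists x, v x = y.
Proof.
move=> [ms [ms' Hv]] y; have [k [z [_ _ h]]] := Vdecomp' Hv y.
by exists (wcat (nth [::] ms k) z).
Qed.

Lemma Vinv_spec v : isV v -> forall x, Vinv v (v x) = x /\ v (Vinv v x) = x.
Proof.
move=> hv; rewrite /Vinv.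
apply: (epsilon_spec (inhabits id) (fun g => forall x, g (v x) = x /\ v (g x) = x)).
pose g y := epsilon (inhabits y) (fun x => v x = y).
have hg : forall y, v (g y) = y.
  move=> y; exact: (epsilon_spec (inhabits y) (fun x => v x = y) (V_surj hv y)).
exists g => x; split => //; apply: (V_inj hv); exact: hg.
Qed.

Lemma Vinv_comp v w : isV v -> isV w -> forall x,
  Vinv (v \o w) x = Vinv w (Vinv v x).
Proof.
move=> hv hw x; have hvw := Vcomp hv hw.
have e : (v \o w) (Vinv w (Vinv v x)) = x.
  by rewrite /= (proj2 (Vinv_spec hw _)) (proj2 (Vinv_spec hv _)).
by rewrite -{1}e (proj1 (Vinv_spec hvw _)).
Qed.

Lemma isQ2_wcat m z : isQ2 (wcat m z) <-> isQ2 z.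
Proof.
split => [[N hN] | [N hN]].
  exists N => n hn; rewrite -(wcat_ge m z n); apply: hN.
  exact: leq_trans hn (leq_addr _ _).
exists (N + size m) => n hn; rewrite /wcat ltnNge (leq_trans (leq_addl _ _) hn) /=.
apply: hN; lia.
Qed.

Lemma V_Q2 v : isV v -> forall x, isQ2 (v x) <-> isQ2 x.
Proof.
move=> [ms [ms' Hv]] x; have [k [z [_ e f]]] := Vdecomp Hv x.
by rewrite f e !isQ2_wcat.
Qed.

Lemma Vinv_Q2 v : isV v -> forall x, isQ2 (Vinv v x) <-> isQ2 x.
Proof.
move=> hv x; rewrite -(V_Q2 hv) (proj2 (Vinv_spec hv x)); done.
Qed.

Definition loc (v : cantor -> cantor) (y : cantor) (d : int) : Prop :=
  exists a b, [/\ in_cyl a y, (forall z, v (wcat a z) = wcat b z) &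
                  d = ((size a)%:Z - (size b)%:Z)%R].

Lemma loc_aux v a1 b1 u b2 :
  (forall z, v (wcat a1 z) = wcat b1 z) ->
  (forall z, v (wcat (a1 ++ u) z) = wcat b2 z) ->
  ((size (a1 ++ u))%:Z - (size b2)%:Z = (size a1)%:Z - (size b1)%:Z)%R.
Proof.
move=> h1 h2.
have hs : size b2 = size (b1 ++ u).
  apply: wcat_size => z; by rewrite -h2 wcat_cat h1 wcat_cat.
rewrite hs !size_cat; lia.
Qed.

Lemma loc_unique v y d1 d2 : loc v y d1 -> loc v y d2 -> d1 = d2.
Proof.
move=> [a1 [b1 [[z1 hy1] h1 ->]]] [a2 [b2 [[z2 hy2] h2 ->]]].
rewrite hy1 in hy2; case: (wcat_prefix hy2) => [[u hu] | [u hu]].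
  subst a2; symmetry; exact: loc_aux h1 h2.
subst a1; exact: loc_aux h2 h1.
Qed.

Lemma loc_data v ms ms' k z : V_data v ms ms' -> k < size ms ->
  loc v (wcat (nth [::] ms k) z)
      ((size (nth [::] ms k))%:Z - (size (nth [::] ms' k))%:Z)%R.
Proof.
move=> [_ _ _ H] hk; exists (nth [::] ms k), (nth [::] ms' k); split => //.
  by exists z.
by move=> z'; apply: H.
Qed.

Lemma slope_spec v y : isV v -> loc v y (log2_slope v y).
Proof.
move=> hv; rewrite /log2_slope.
set P := fun d : int => _.
have [ms [ms' Hv]] := hv.
have ex : exists d, P d.
  have [k [[hk hin] _]] := (let: And4 pm _ _ _ := Hv in pm) y.
  by exists ((size (nth [::] ms k))%:Z - (size (nth [::] ms' k))%:Z)%R, ms, ms', k.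
have := epsilon_spec (inhabits 0%R) P ex.
move=> [ms1 [ms1' [k [Hv1 hk [z hz] ->]]]].
rewrite hz; exact: loc_data.
Qed.

Lemma slope_eq v y d : isV v -> loc v y d -> log2_slope v y = d.
Proof. move=> hv hl; exact: loc_unique (slope_spec y hv) hl. Qed.

Lemma loc_comp v w y d1 d2 : loc w y d1 -> loc v (w y) d2 ->
  loc (v \o w) y (d1 + d2)%R.
Proof.
move=> [a [b [[z hy] hw ->]]] [c [e [[t ht] hv ->]]].
rewrite hy hw in ht.
case: (wcat_prefix ht) => [[u hu] | [u hu]].
- subst c; rewrite wcat_cat in ht; have hz := wcat_inj ht.
  exists (a ++ u), e; split.
  + by exists t; rewrite hy hz wcat_cat.
  + by move=> z'; rewrite /= wcat_cat hw -wcat_cat hv.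
  + rewrite !size_cat; lia.
- subst b; exists a, (e ++ u); split.
  + by exists z.
  + by move=> z'; rewrite /= hw wcat_cat hv wcat_cat.
  + rewrite !size_cat; lia.
Qed.

Module DD.
Import GRing.Theory Num.Theory.

Lemma q2sum_ext (x : cantor) N M : N <= M -> (forall n, N <= n -> x n = false) ->
  (\sum_(i < M) (x i)%:R / 2%:R ^+ i.+1 = \sum_(i < N) (x i)%:R / 2%:R ^+ i.+1 :> rat)%R.
Proof.
move=> hNM hx; rewrite -!(big_mkord xpredT (fun i => (x i)%:R / 2%:R ^+ i.+1)%R).
rewrite (@big_cat_nat _ _ _ N 0 M) //=.
rewrite -[RHS]addr0; congr (_ + _)%R.
rewrite big_nat_cond big1 // => i /andP [/andP [hi _] _].
by rewrite hx // mul0r.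
Qed.

Lemma q2rat_eq x N : isQ2 x -> (forall n, N <= n -> x n = false) ->
  q2rat x = (\sum_(i < N) (x i)%:R / 2%:R ^+ i.+1)%R.
Proof.
move=> hq hN; rewrite /q2rat.
have hB := epsilon_spec (inhabits 0) (fun N => forall n, N <= n -> x n = false) hq.
set B := epsilon _ _ in hB *.
rewrite -(@q2sum_ext x B (maxn B N)) ?leq_maxl //.
rewrite (@q2sum_ext x N (maxn B N)) ?leq_maxr //.
Qed.

Lemma q2rat_zero : q2rat (fun _ => false) = 0%R.
Proof.
rewrite (@q2rat_eq _ 0) ?big_ord0 //; by exists 0.
Qed.

Lemma nu_zero : nu (q2rat (fun _ => false)) = 0%R.
Proof. by rewrite q2rat_zero /nu eqxx. Qed.

Lemma nu_last (x : cantor) L : x L = true -> (forall n, L < n -> x n = false) ->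
  nu (q2rat x) = (- (L.+1)%:Z)%R.
Proof.
move=> hL hn.
have hq : isQ2 x by exists L.+1.
rewrite (@q2rat_eq x L.+1) //.
set K := \sum_(i < L.+1) x i * 2 ^ (L - i).
have eK : (\sum_(i < L.+1) (x i)%:R / 2%:R ^+ i.+1 = K%:R / (2 ^ L.+1)%:R :> rat)%R.
  rewrite /K natr_sum mulr_suml; apply: eq_bigr => i _.
  have hi : i <= L by rewrite -ltnS.
  have e2 : ((2%:R : rat) ^+ L.+1 = 2%:R ^+ (L - i) * 2%:R ^+ i.+1)%R.
    by rewrite -exprD; congr (_ ^+ _)%R; lia.
  rewrite natrM !natrX e2 invfM mulrA mulfK //.
  by rewrite expf_neq0 // pnatr_eq0.
have oK : odd K.
  rewrite /K big_ord_recr /= subnn expn0 hL muln1 oddD /= addbT.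
  rewrite -dvdn2; apply: dvdn_sum => i _; apply: dvdn_mull.
  apply: dvdn_exp => //; rewrite subn_gt0; exact: ltn_ord.
rewrite eK.
have cop : coprime `|Posz K| `|Posz (2 ^ L.+1)|.
  by rewrite !absz_nat coprimeXr // coprimen2.
have nz : (K%:R / (2 ^ L.+1)%:R != 0 :> rat)%R.
  rewrite mulf_neq0 // ?invr_eq0 pnatr_eq0 ?expn_eq0 //.
  by apply/eqP => h; rewrite h in oK.
rewrite /nu (negbTE nz).
have := coprimeq_num cop; have := coprimeq_den cop.
rewrite /intmul /= => -> ->.
rewrite gtr0_sg ?mul1r; last by rewrite ltz_nat expn_gt0.
case: eqP => [h | _]; first by exfalso; move: h; apply/eqP; rewrite eqz_nat expn_eq0.
have hK : logn 2 K = 0 by rewrite logn_coprime // coprime2n.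
have h2 : logn 2 (2 ^ L.+1) = L.+1 by rewrite pfactorK.
move: hK h2; rewrite /absz /= => -> ->; lia.


Qed.

Section Grp.
Variable Gam : groupType.
Implicit Types g h zeta xi : Gam.

Lemma zpow0 g : zpow g 0 = 1%g.
Proof. by []. Qed.

Lemma zpow_sub g m n : zpow g (m%:Z - n%:Z)%R = (g ^+ m * (g ^+ n)^-1)%g.
Proof.
case: (leqP n m) => h.
  have -> : (m%:Z - n%:Z)%R = Posz (m - n) by lia.
  by rewrite /= expgnFr.
have -> : (m%:Z - n%:Z = Negz (n - m).-1)%R.
  rewrite NegzE prednK ?subn_gt0 //; lia.
rewrite /= prednK ?subn_gt0 //.
have e : (g ^+ n = g ^+ (n - m) * g ^+ m)%g by rewrite -expgnDr subnK // ltnW.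
by rewrite e invgM mulgA mulgV mul1g.
Qed.

Lemma int_sub (z : int) : exists m n, z = (m%:Z - n%:Z)%R.
Proof.
case: z => n; first by exists n, 0; rewrite subr0.
by exists 0, n.+1; rewrite NegzE sub0r.
Qed.

Lemma zpowD g a b : zpow g (a + b)%R = (zpow g a * zpow g b)%g.
Proof.
have [m1 [n1 ->]] := int_sub a; have [m2 [n2 ->]] := int_sub b.
have -> : (m1%:Z - n1%:Z + (m2%:Z - n2%:Z) = (m1 + m2)%:Z - (n1 + n2)%:Z)%R by lia.
rewrite !zpow_sub !expgnDr invgM.
have c1 : commute ((g ^+ n1)^-1)%g (g ^+ m2)%g.
  apply/commute_sym/commuteV/commuteX2; exact: commute_refl.
have c2 : commute ((g ^+ n1)^-1)%g ((g ^+ n2)^-1)%g.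
  apply/commuteV/commute_sym/commuteV/commuteX2; exact: commute_refl.
by rewrite !mulgA -[(g ^+ m1 * _ * g ^+ m2)%g]mulgA c1 !mulgA -[(_ * (g ^+ n1)^-1 * _)%g]mulgA c2 !mulgA.
Qed.

Lemma central1 : central (1%g : Gam).
Proof. by move=> g; rewrite mulg1 mul1g. Qed.

Lemma centralX zeta n : central zeta -> central (zeta ^+ n)%g.
Proof. move=> hz g; apply: commute_sym; apply: commuteX; exact: commute_sym. Qed.

Lemma centralV zeta : central zeta -> central (zeta^-1)%g.
Proof. move=> hz g; apply: commute_sym; apply: commuteV; exact: commute_sym. Qed.

Lemma central_zpow zeta z : central zeta -> central (zpow zeta z).
Proof.
move=> hz; case: z => n /=; first exact: centralX.
exact/centralV/centralX.
Qed.

Lemma zpowM zeta xi z : central zeta -> central xi ->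
  zpow (zeta * xi)%g z = (zpow xi z * zpow zeta z)%g.
Proof.
move=> hz hx; case: z => n /=.
  by rewrite expgMn; [exact: (centralX n hz) | exact: hz].
by rewrite expgMn ?invgM //; exact: hz.
Qed.

Lemma zpowN1 zeta : zpow zeta (-1)%R = (zeta^-1)%g.
Proof. by []. Qed.

End Grp.

End DD.
Import DD.

Lemma last_wcat (m : word) (z : cantor) L : z L = true -> (forall n, L < n -> z n = false) ->
  wcat m z (L + size m) = true /\ (forall n, L + size m < n -> wcat m z n = false).
Proof.
move=> hL hn; split; first by rewrite wcat_ge.
move=> n hlt; rewrite /wcat ltnNge (leq_trans (leq_addl L _) (ltnW hlt)) /=.
apply: hn; lia.
Qed.

Lemma p_v_zero v ms ms' k z L : V_data v ms ms' -> k < size ms ->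
  z L = true -> (forall n, L < n -> z n = false) ->
  p_v v (wcat (nth [::] ms' k) z) = 0%R.
Proof.
move=> Hv hk hL hn.
have hv : isV v by exists ms, ms'.
have hinv : Vinv v (wcat (nth [::] ms' k) z) = wcat (nth [::] ms k) z.
  by case: Hv => _ _ _ H; rewrite -H // (proj1 (Vinv_spec hv _)).
rewrite /p_v hinv (slope_eq hv (loc_data z Hv hk)).
have [a1 a2] := last_wcat (nth [::] ms' k) hL hn.
have [b1 b2] := last_wcat (nth [::] ms k) hL hn.
rewrite (nu_last a1 a2) (nu_last b1 b2); lia.
Qed.

Lemma c_notQ2 (Gam : groupType) (zeta : Gam) v x : ~ isQ2 x -> c_coc zeta v x = 1%g.
Proof. by rewrite /c_coc; case: excluded_middle_informative. Qed.

Lemma c_Q2 (Gam : groupType) (zeta : Gam) v x : isQ2 x -> c_coc zeta v x = zpow zeta (p_v v x).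
Proof. by rewrite /c_coc; case: excluded_middle_informative. Qed.

Lemma In_map_nth (f : word -> cantor) (ms : seq word) k : k < size ms ->
  List.In (f (nth [::] ms k)) (map f ms).
Proof.
elim: ms k => [|m ms IH] [|k] //= hk; first by left.
by right; apply: IH.
Qed.

Lemma c_fsupp (Gam : groupType) (zeta : Gam) v : isV v -> fsupp (c_coc zeta v).
Proof.
move=> hv; split; first by move=> x; exact: c_notQ2.
have [ms [ms' Hv]] := hv.
exists ((fun _ => false) :: map (fun m => wcat m (fun _ => false)) ms') => x hx.
case: (classic (isQ2 x)) => hq; last by case: hx; exact: c_notQ2.
have [k [z [hk e _]]] := Vdecomp' Hv x.
case: (classic (exists n, z n = true)) => [[n0 hn0] | hno].
  exfalso; apply: hx; rewrite c_Q2 //.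
  have hqz : isQ2 z by rewrite e in hq; exact: (proj1 (isQ2_wcat _ _) hq).
  have [N hN] := hqz.
  have ub : forall i, z i -> i <= N.
    move=> i hi; case: (leqP i N) => // /ltnW h; by rewrite hN in hi.
  case: (ex_maxnP (ex_intro (fun i => z i) n0 hn0) ub) => L hL hmax.
  rewrite e (p_v_zero Hv hk hL) // => n hLn.
  apply/negbTE/negP => hzn; have := hmax n hzn; lia.
right; rewrite e; have -> : z = (fun _ => false).
  apply: functional_extensionality => n; apply/negbTE/negP => h; apply: hno; by exists n.
apply: (@In_map_nth (fun m => wcat m (fun _ => false))).
by case: Hv => _ _ <-.
Qed.

Lemma c_central (Gam : groupType) (zeta : Gam) v x : central zeta -> central (c_coc zeta v x).
Proof.
move=> hz; case: (classic (isQ2 x)) => hq.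
  rewrite c_Q2 //; exact: central_zpow.
rewrite c_notQ2 //; exact: central1.
Qed.

Lemma p_v_comp v w x : isV v -> isV w ->
  p_v (v \o w) x = (p_v v x + p_v w (Vinv v x))%R.
Proof.
move=> hv hw; rewrite /p_v Vinv_comp //.
have hvw := Vcomp hv hw.
set y := Vinv w (Vinv v x).
have e : w y = Vinv v x by rewrite /y (proj2 (Vinv_spec hw _)).
have hl := loc_comp (slope_spec y hw) (slope_spec (w y) hv).
rewrite (slope_eq hvw hl) e; lia.
Qed.

Lemma cocycle (Gam : groupType) (zeta : Gam) v w : isV v -> isV w ->
  c_coc zeta (v \o w) = (fun x => c_coc zeta v x * actV v (c_coc zeta w) x)%g.
Proof.
move=> hv hw; apply: functional_extensionality => x; rewrite /actV.
case: (classic (isQ2 x)) => hq.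
  have hq' : isQ2 (Vinv v x) by apply/(Vinv_Q2 hv).
  by rewrite !c_Q2 // p_v_comp // zpowD.
have hq' : ~ isQ2 (Vinv v x) by move/(Vinv_Q2 hv).
by rewrite !c_notQ2 // mulg1.
Qed.

Lemma fsupp_mul (Gam : groupType) (a b : cantor -> Gam) :
  fsupp a -> fsupp b -> fsupp (fun x => a x * b x)%g.
Proof.
move=> [ha [s1 hs1]] [hb [s2 hs2]]; split.
  by move=> x hx; rewrite ha // hb // mulg1.
exists (s1 ++ s2)%list => x hx; apply: List.in_or_app.
case: (classic (a x = 1%g)) => h1.
  by right; apply: hs2 => h2; apply: hx; rewrite h1 h2 mulg1.
by left; apply: hs1.
Qed.

Lemma fsupp_inv (Gam : groupType) (a : cantor -> Gam) :
  fsupp a -> fsupp (fun x => (a x)^-1)%g.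
Proof.
move=> [ha [s hs]]; split; first by move=> x hx; rewrite ha // invg1.
exists s => x hx; apply: hs => h; apply: hx; by rewrite h invg1.
Qed.

Definition v0 (x : cantor) : cantor :=
  if x 0 then (if x 1 then wcat [:: true] (dropc 2 x) else wcat [:: false; true] (dropc 2 x))
  else wcat [:: false; false] (dropc 1 x).

Definition ms0 : seq word := [:: [:: false]; [:: true; false]; [:: true; true]].
Definition ms0' : seq word := [:: [:: false; false]; [:: false; true]; [:: true]].

Lemma V_data_v0 : V_data v0 ms0 ms0'.
Proof.
split => //.
- apply/partitionP => x; rewrite /= /incb /=.
  by case: (x 0); case: (x 1).
- apply/partitionP => x; rewrite /= /incb /=.
  by case: (x 0); case: (x 1).
- move=> [|[|[|k]]] y //= _; rewrite /v0 /=.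
  + by have := dropc_wcat [:: false] y => /= ->.
  + by have := dropc_wcat [:: true; false] y => /= ->.
  + by have := dropc_wcat [:: true; true] y => /= ->.
Qed.

Definition x0 : cantor := fun _ => false.

Lemma x0_Q2 : isQ2 x0.
Proof. by exists 0. Qed.

Lemma p_v0 : p_v v0 x0 = (-1)%R.
Proof.
have hv : isV v0 by exists ms0, ms0'; exact: V_data_v0.
have e0 : v0 x0 = x0.
  apply: functional_extensionality => n; rewrite /v0 /x0 /=.
  by rewrite /wcat; case: n => [|[|n]].
have hi : Vinv v0 x0 = x0 by rewrite -{1}e0 (proj1 (Vinv_spec hv _)).
have hl : loc v0 x0 (-1)%R.
  exists [:: false], [:: false; false]; split => //.
    exists x0; apply: functional_extensionality => n; rewrite /wcat /x0.
    by case: n.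
  move=> z; case: V_data_v0 => _ _ _ H; exact: (H 0 z).
by rewrite /p_v hi (slope_eq hv hl) /x0 nu_zero.
Qed.


Theorem mainTheorem13 (Gam : groupType) :
  (* c(zeta) takes values in (+)_{Q_2} Z(Gamma) *)
  (forall zeta : Gam, central zeta ->
     forall v, isV v ->
       fsupp (c_coc zeta v) /\ (forall x, central (c_coc zeta v x))) /\
  (* cocycle identity c_{vw} = c_v . c_w^v *)
  (forall zeta : Gam, central zeta ->
     forall v w, isV v -> isV w ->
       c_coc zeta (v \o w) = (fun x => c_coc zeta v x * actV v (c_coc zeta w) x)%g) /\
  (* each E_zeta is an automorphism of G *)
  (forall zeta : Gam, central zeta -> isAutG (E_aut zeta)) /\
  (* zeta |-> E_zeta is a group morphism Z(Gamma) -> Aut(G) *)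
  (forall zeta xi : Gam, central zeta -> central xi ->
     forall g, inG g -> E_aut (zeta * xi)%g g = E_aut zeta (E_aut xi g)) /\
  (* and it is injective *)
  (forall zeta xi : Gam, central zeta -> central xi ->
     (forall g, inG g -> E_aut zeta g = E_aut xi g) -> zeta = xi).
Proof.
split.
  move=> zeta hz v hv; split; [exact: c_fsupp | move=> x; exact: c_central].
split.
  move=> zeta hz v w hv hw; exact: cocycle.
split.
  move=> zeta hz; split.
  - move=> [a v] [ha hv]; split => //=; apply: fsupp_mul => //; exact: c_fsupp.
  - move=> [a v] [b w] [ha hv] [hb hw]; rewrite /E_aut /Gmul /=; congr pair.
    apply: functional_extensionality => x; rewrite (cocycle zeta hv hw) /actV.
    rewrite !mulgA; congr (_ * _)%g; rewrite -!mulgA; congr (_ * _)%g.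
    by rewrite (c_central v x hz (b _)).
  - move=> [a v] [b w] _ _ h.
    have e2 := congr1 snd h; have e1 := congr1 fst h; simpl in e1, e2; subst w.
    congr pair; apply: functional_extensionality => x.
    by have := congr1 (fun f => f x) e1 => /= /mulIg.
  - move=> [b w] [hb hw].
    exists ((fun x => b x * (c_coc zeta w x)^-1)%g, w); split.
      split => //=; apply: fsupp_mul => //; apply: fsupp_inv; exact: c_fsupp.
    rewrite /E_aut /=; congr pair; apply: functional_extensionality => x.
    by rewrite mulgVK.
split.
  move=> zeta xi hz hx [a v] _; rewrite /E_aut /=; congr pair.
  apply: functional_extensionality => x; rewrite -mulgA; congr (_ * _)%g.
  case: (classic (isQ2 x)) => hq.
    by rewrite !c_Q2 // zpowM.
  by rewrite !c_notQ2 // mulg1.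
move=> zeta xi hz hx H.
have hg : inG ((fun _ => 1%g) : cantor -> Gam, v0).
  split; last by exists ms0, ms0'; exact: V_data_v0.
  by split => //; exists nil.
have := congr1 (fun g => g.1 x0) (H _ hg).
rewrite /E_aut /= !c_Q2; try exact: x0_Q2.
by rewrite p_v0 !zpowN1 !mul1g => /invg_inj.
Qed.
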